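(* For every $n\ge1$ and every $\delta>0$, \[ \lim_{\substack{x\to\infty\\ \{\log_2 x\}\ge\delta}}\frac{\mathbb{P}\{S_n>x\}}{\mathbb{P}\{X>x\}}=n, \] and moreover \[ n=\liminf_{x\to\infty}x\,\mathbb{P}\{S_n>x\}<\limsup_{x\to\infty}x\,\mathbb{P}\{S_n>x\}=2n . \]
   Context: $X,X_1,X_2,\ldots$ are iid St.~Petersburg random variables: $\mathbb{P}\{X=2^k\}=2^{-k}$, $k\in\{1,2,\ldots\}$; $S_n=X_1+\dots+X_n$; $\{y\}$ denotes the fractional part of $y$. *)

(* Defs.v *)
From Stdlib Require Import Reals Lra Lia ZArith Arith.
Open Scope R_scope.

(* Point masses of S_n = X_1 + ... + X_n, X_i iid St. Petersburg
   (P{X = 2^k} = 2^{-k}, k >= 1).  S_n is integer valued, so its law is the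
   n-fold convolution of the law of X:
     stp_pmf 0 m     = [m = 0]                 (S_0 = 0)
     stp_pmf (n+1) m = sum_{k>=1, 2^k <= m} 2^{-k} * stp_pmf n (m - 2^k).
   (Only k <= m can satisfy 2^k <= m, so the sum is finite.) *)
Fixpoint stp_pmf (n m : nat) : R :=
  match n with
  | O => if Nat.eqb m 0 then 1 else 0
  | S n' =>
      sum_f_R0 (fun k =>
        if andb (Nat.leb 1 k) (Nat.leb (2 ^ k) m)
        then (/ 2) ^ k * stp_pmf n' (m - 2 ^ k)
        else 0) m
  end.

(* P{S_n <= x} : sum of the masses at integers m <= x
   (all such m are <= up x). *)
Definition stp_cdf (n : nat) (x : R) : R :=
  sum_f_R0 (fun m => if Rle_dec (INR m) x then stp_pmf n m else 0)
           (Z.to_nat (up x)).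

Definition stp_tail (n : nat) (x : R) : R := 1 - stp_cdf n x.

Definition log2 (x : R) : R := ln x / ln 2.

(* Main.v *)
Require Import Defs.
From Stdlib Require Import Reals Lra Lia Arith ZArith.
Open Scope R_scope.

Lemma sum_ext (f g : nat -> R) N :
  (forall k, (k <= N)%nat -> f k = g k) -> sum_f_R0 f N = sum_f_R0 g N.
Proof.
  induction N; intros H; simpl.
  - apply H; lia.
  - rewrite IHN by (intros; apply H; lia). rewrite (H (S N)) by lia. reflexivity.
Qed.

Lemma sum_le (f g : nat -> R) N :
  (forall k, (k <= N)%nat -> f k <= g k) -> sum_f_R0 f N <= sum_f_R0 g N.
Proof.
  induction N; intros H; simpl.
  - apply H; lia.
  - apply Rplus_le_compat. apply IHN; intros; apply H; lia. apply H; lia.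
Qed.

Lemma sum_nonneg (f : nat -> R) N :
  (forall k, (k <= N)%nat -> 0 <= f k) -> 0 <= sum_f_R0 f N.
Proof.
  intros H. replace 0 with (sum_f_R0 (fun _ => 0) N).
  apply sum_le; auto. clear. induction N; simpl; lra.
Qed.

Lemma sum_add (f g : nat -> R) N :
  sum_f_R0 (fun k => f k + g k) N = sum_f_R0 f N + sum_f_R0 g N.
Proof. induction N; simpl; lra. Qed.

Lemma sum_scal (f : nat -> R) c N :
  sum_f_R0 (fun k => c * f k) N = c * sum_f_R0 f N.
Proof. induction N; simpl; [lra|]. rewrite IHN; ring. Qed.

Lemma sum_zero (f : nat -> R) N :
  (forall k, (k <= N)%nat -> f k = 0) -> sum_f_R0 f N = 0.
Proof.
  intros H. rewrite (sum_ext f (fun _ => 0)) by auto. clear. induction N; simpl; lra.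
Qed.

Lemma sum_single (f : nat -> R) N j :
  (forall k, k <> j -> f k = 0) -> (j <= N)%nat -> sum_f_R0 f N = f j.
Proof.
  intros H. induction N; intros Hj; simpl.
  - assert (j = 0%nat) by lia. subst; reflexivity.
  - destruct (Nat.eq_dec j (S N)).
    + subst. rewrite sum_zero. lra. intros k Hk. apply H. lia.
    + rewrite IHN by lia. rewrite (H (S N)) by lia. lra.
Qed.

Definition cf (k N : nat) : R :=
  if andb (Nat.leb 1 k) (Nat.leb (2 ^ k) N) then (/ 2) ^ k else 0.

Lemma cf_spec k N :
  ((1 <= k)%nat /\ (2 ^ k <= N)%nat /\ cf k N = (/2)^k) \/
  (~ ((1 <= k)%nat /\ (2 ^ k <= N)%nat) /\ cf k N = 0).
Proof.
  unfold cf. destruct (Nat.leb_spec 1 k); destruct (Nat.leb_spec (2^k) N); simpl.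
  - left; auto.
  - right; split; [lia|auto].
  - right; split; [lia|auto].
  - right; split; [lia|auto].
Qed.

Lemma cf_nonneg k N : 0 <= cf k N.
Proof.
  destruct (cf_spec k N) as [[_ [_ ->]]|[_ ->]]; [|lra].
  apply pow_le; lra.
Qed.

Lemma pmf_S n m :
  stp_pmf (S n) m = sum_f_R0 (fun k => cf k m * stp_pmf n (m - 2 ^ k)) m.
Proof.
  simpl. apply sum_ext. intros k _. unfold cf.
  destruct (andb _ _); lra.
Qed.

Lemma pmf_nonneg n m : 0 <= stp_pmf n m.
Proof.
  revert m; induction n; intros m.
  - simpl. destruct (Nat.eqb m 0); lra.
  - rewrite pmf_S. apply sum_nonneg. intros k _.
    apply Rmult_le_pos; [apply cf_nonneg|apply IHn].
Qed.

Definition F (n N : nat) : R := sum_f_R0 (stp_pmf n) N.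

Lemma F_S n N : F n (S N) = F n N + stp_pmf n (S N).
Proof. reflexivity. Qed.

Lemma F_nonneg n N : 0 <= F n N.
Proof. apply sum_nonneg; intros; apply pmf_nonneg. Qed.

Lemma F_mono n L N : (L <= N)%nat -> F n L <= F n N.
Proof.
  intros H. induction H. lra. rewrite F_S. pose proof (pmf_nonneg n (S m)). lra.
Qed.

Lemma F0 N : F 0 N = 1.
Proof.
  induction N. reflexivity. rewrite F_S, IHN. simpl. lra.
Qed.

Lemma F_rec n N : F (S n) N = sum_f_R0 (fun k => cf k N * F n (N - 2 ^ k)) N.
Proof.
  induction N.
  - unfold F. simpl. unfold cf. simpl. lra.
  - rewrite F_S, IHN, pmf_S. simpl sum_f_R0 at 1.
    replace (sum_f_R0 (fun k : nat => cf k N * F n (N - 2 ^ k)) N) with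
      (sum_f_R0 (fun k : nat => cf k N * F n (N - 2 ^ k)) (S N)).
    2:{ simpl. replace (cf (S N) N) with 0. lra.
        destruct (cf_spec (S N) N) as [[_ [H _]]|[_ ->]]; auto.
        pose proof (Nat.pow_gt_lin_r 2 (S N) ltac:(lia)). lia. }
    rewrite <- sum_add. symmetry. apply sum_ext. intros k Hk.
    destruct (cf_spec k (S N)) as [[H1 [H2 ->]]|[H1 ->]];
    destruct (cf_spec k N) as [[H3 [H4 ->]]|[H3 ->]].
    + replace (S N - 2 ^ k)%nat with (S (N - 2 ^ k)) by lia. rewrite F_S. ring.
    + assert (2 ^ k = S N)%nat by lia. rewrite H. rewrite Nat.sub_diag. unfold F. simpl. ring.
    + exfalso. lia.
    + ring.
Qed.

Definition tl (n N : nat) : R := 1 - F n N.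
Definition U (N : nat) : R := (/2) ^ (Nat.log2 N).

Lemma sumcf_min N m : sum_f_R0 (fun k => cf k N) m = 1 - (/2) ^ (Nat.min m (Nat.log2 N)).
Proof.
  induction m.
  - simpl. unfold cf. simpl. lra.
  - simpl sum_f_R0. rewrite IHm.
    destruct (Nat.eq_dec N 0) as [->|HN].
    + destruct (cf_spec (S m) 0) as [[_ [H _]]|[_ ->]].
      { pose proof (Nat.pow_nonzero 2 (S m)). lia. }
      simpl Nat.log2. rewrite !Nat.min_0_r. lra.
    + destruct (cf_spec (S m) N) as [[H1 [H2 ->]]|[H1 ->]].
      * apply Nat.log2_le_pow2 in H2; [|lia].
        rewrite Nat.min_l by lia. rewrite Nat.min_l by lia. simpl. lra.
      * assert (~ (2 ^ S m <= N)%nat) by lia.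
        rewrite Nat.log2_le_pow2 in H; [|lia].
        rewrite Nat.min_r by lia. rewrite Nat.min_r by lia. lra.
Qed.

Lemma log2_le_self N : (Nat.log2 N <= N)%nat.
Proof.
  destruct (Nat.eq_dec N 0) as [->|H]. rewrite Nat.log2_nonpos; lia.
  pose proof (Nat.log2_spec N ltac:(lia)). pose proof (Nat.pow_gt_lin_r 2 (Nat.log2 N) ltac:(lia)). lia.
Qed.

Lemma sumcf N : sum_f_R0 (fun k => cf k N) N = 1 - U N.
Proof. rewrite sumcf_min. rewrite Nat.min_r by apply log2_le_self. reflexivity. Qed.

Lemma F1 N : F 1 N = 1 - U N.
Proof.
  rewrite F_rec. rewrite <- sumcf. apply sum_ext. intros. rewrite F0. ring.
Qed.

Lemma tl1 N : tl 1 N = U N.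
Proof. unfold tl. rewrite F1. ring. Qed.

Lemma tl0 N : tl 0 N = 0.
Proof. unfold tl. rewrite F0. ring. Qed.

Lemma tl_rec n N : tl (S n) N = U N + sum_f_R0 (fun k => cf k N * tl n (N - 2 ^ k)) N.
Proof.
  unfold tl at 1. rewrite F_rec.
  replace (sum_f_R0 (fun k : nat => cf k N * tl n (N - 2 ^ k)) N) with
    (sum_f_R0 (fun k => cf k N) N - sum_f_R0 (fun k : nat => cf k N * F n (N - 2 ^ k)) N).
  rewrite sumcf. ring.
  replace (sum_f_R0 (fun k : nat => cf k N * tl n (N - 2 ^ k)) N) with
   (sum_f_R0 (fun k => cf k N + (-1) * (cf k N * F n (N - 2 ^ k))) N).
  rewrite sum_add, sum_scal. ring.
  apply sum_ext. intros. unfold tl. ring.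
Qed.

Lemma tl_le1 n N : tl n N <= 1.
Proof. unfold tl. pose proof (F_nonneg n N). lra. Qed.

Lemma tl_anti n L N : (L <= N)%nat -> tl n N <= tl n L.
Proof. unfold tl. intros H. pose proof (F_mono n L N H). lra. Qed.

Lemma half_pow_mul k : (/2)^k * 2^k = 1.
Proof. rewrite <- Rpow_mult_distr. rewrite Rinv_l by lra. apply pow1. Qed.

Lemma two_pow_pos k : 0 < 2 ^ k.
Proof. apply pow_lt; lra. Qed.

Lemma half_pow_pos k : 0 < (/2) ^ k.
Proof. apply pow_lt; lra. Qed.

Lemma INR_pow2 k : INR (2 ^ k) = 2 ^ k.
Proof. rewrite pow_INR. simpl. f_equal. Qed.

Lemma pow_le1 x n : 0 <= x <= 1 -> x ^ n <= 1.
Proof. intros H. induction n; simpl. lra. pose proof (pow_le x n). nra. Qed.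

Lemma half_pow_anti a b : (a <= b)%nat -> (/2)^b <= (/2)^a.
Proof.
  intros H. replace b with (a + (b - a))%nat by lia. rewrite pow_add.
  pose proof (half_pow_pos a).
  assert ((/2)^(b-a) <= 1). { apply pow_le1; lra. }
  nra.
Qed.

Lemma U_pos N : 0 < U N.
Proof. apply half_pow_pos. Qed.

Lemma U_le1 N : U N <= 1.
Proof. apply pow_le1; lra. Qed.

Lemma U_anti M N : (M <= N)%nat -> U N <= U M.
Proof. intros H. apply half_pow_anti. apply Nat.log2_le_mono; auto. Qed.

Lemma U_low N : (1 <= N)%nat -> 1 <= INR N * U N.
Proof.
  intros H. destruct (Nat.log2_spec N ltac:(lia)) as [H1 _].
  apply le_INR in H1. rewrite INR_pow2 in H1. unfold U.
  pose proof (half_pow_mul (Nat.log2 N)). pose proof (half_pow_pos (Nat.log2 N)). nra.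
Qed.

Lemma U_up N : (INR N + 1) * U N <= 2.
Proof.
  destruct (Nat.eq_dec N 0) as [->|HN].
  - unfold U. rewrite Nat.log2_nonpos by lia. simpl. lra.
  - destruct (Nat.log2_spec N ltac:(lia)) as [_ H1].
    assert (H2 : (N + 1 <= 2 ^ S (Nat.log2 N))%nat) by lia.
    apply le_INR in H2. rewrite INR_pow2, plus_INR in H2. simpl in H2. unfold U.
    pose proof (half_pow_mul (Nat.log2 N)). pose proof (half_pow_pos (Nat.log2 N)). simpl INR in H2. nra.
Qed.

Lemma U_small N : U N <= 2 / (INR N + 1).
Proof.
  pose proof (U_up N). pose proof (pos_INR N). apply Rmult_le_reg_l with (INR N + 1). lra.
  field_simplify; lra.
Qed.

Lemma tl_lower n N : INR n * U N - INR n ^ 2 * U N ^ 2 <= tl n N.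
Proof.
  induction n.
  - rewrite tl0. simpl. lra.
  - rewrite tl_rec.
    assert (H : sum_f_R0 (fun k => cf k N * tl n N) N <=
                sum_f_R0 (fun k : nat => cf k N * tl n (N - 2 ^ k)) N).
    { apply sum_le. intros k _. apply Rmult_le_compat_l. apply cf_nonneg. apply tl_anti. lia. }
    rewrite (sum_ext _ (fun k => tl n N * cf k N)) in H by (intros; ring).
    rewrite sum_scal, sumcf in H.
    pose proof (U_pos N). pose proof (U_le1 N). pose proof (pos_INR n).
    rewrite S_INR.
    set (t := U N) in *. set (T := tl n N) in *. set (m := INR n) in *.
    assert ((1 - t) * (m * t - m ^ 2 * t ^ 2) <= (1 - t) * T) by (apply Rmult_le_compat_l; lra).
    nra.
Qed.

Lemma geom_tail y m : 0 < y ->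
  sum_f_R0 (fun k => if Rlt_dec y (2 ^ k) then (/2)^k else 0) m <= 2 / y.
Proof.
  intros Hy.
  assert (G : (2 ^ m <= y -> sum_f_R0 (fun k => if Rlt_dec y (2 ^ k) then (/2)^k else 0) m = 0) /\
              (y < 2 ^ m -> sum_f_R0 (fun k => if Rlt_dec y (2 ^ k) then (/2)^k else 0) m + (/2)^m <= 2 / y)).
  { induction m.
    - simpl. split; intros H.
      + destruct (Rlt_dec y 1); lra.
      + destruct (Rlt_dec y 1); [|lra]. apply Rmult_le_reg_l with y; auto. field_simplify; lra.
    - destruct IHm as [I1 I2]. simpl sum_f_R0.
      assert (Hm : 2 ^ S m = 2 * 2 ^ m) by reflexivity.
      assert (Hh : (/2) ^ S m = /2 * (/2) ^ m) by reflexivity.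
      pose proof (two_pow_pos m). pose proof (half_pow_mul m).
      split; intros HH.
      + rewrite I1 by lra. destruct (Rlt_dec y (2 * 2 ^ m)); lra.
      + destruct (Rlt_dec y (2 * 2 ^ m)); [|lra].
        destruct (Rle_lt_dec (2 ^ m) y) as [H2|H2].
        * rewrite I1 by auto. rewrite Hh.
          assert ((/2)^m * y <= 2). { rewrite Hm in HH. nra. }
          apply Rmult_le_reg_l with y; auto. field_simplify; nra.
        * specialize (I2 H2). rewrite Hh. lra. }
  destruct (Rle_lt_dec (2 ^ m) y) as [H|H].
  - rewrite (proj1 G H). apply Rlt_le, Rdiv_lt_0_compat; lra.
  - pose proof (proj2 G H). pose proof (half_pow_pos m). lra.
Qed.

Lemma cf_le k N : cf k N <= (/2)^k.
Proof. destruct (cf_spec k N) as [[_ [_ ->]]|[_ ->]]. lra. apply Rlt_le, half_pow_pos. Qed.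

Lemma pow2_le_R a b : (a <= b)%nat -> 2 ^ a <= 2 ^ b.
Proof. intros; apply Rle_pow; auto; lra. Qed.

Definition Cc (a : R) (N k : nat) : R :=
  if Rle_dec (2 ^ k) ((1 - a) * INR N) then 0 else cf k N.

Lemma Cc_part a N M : 0 < a -> a <= /4 -> (1 <= N)%nat ->
  INR M <= (1 - a) * INR N ->
  U N + sum_f_R0 (Cc a N) N <= U M.
Proof.
  intros Ha Ha4 HN HM.
  set (K := Nat.log2 N).
  destruct (Nat.log2_spec N ltac:(lia)) as [HK1 HK2]. fold K in HK1, HK2.
  assert (HK1r : 2 ^ K <= INR N) by (rewrite <- INR_pow2; apply le_INR; auto).
  assert (HK2r : INR N < 2 ^ S K) by (rewrite <- INR_pow2; apply lt_INR; auto).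
  pose proof (pos_INR N) as HNp.
  assert (HMN : (M <= N)%nat) by (apply INR_le; nra).
  assert (Hk : forall k, cf k N <> 0 -> (k <= K)%nat).
  { intros k Hc. destruct (cf_spec k N) as [[_ [H _]]|[_ H]]; [|contradiction].
    apply Nat.log2_le_pow2; auto; lia. }
  destruct (Rle_dec (2 ^ K) ((1 - a) * INR N)) as [Hc|Hc].
  - rewrite sum_zero. pose proof (U_anti M N HMN). lra.
    intros k _. unfold Cc. destruct (Rle_dec (2 ^ k) ((1 - a) * INR N)); auto.
    destruct (Req_dec (cf k N) 0) as [E|E]; auto. exfalso. apply n.
    eapply Rle_trans; [apply pow2_le_R, Hk, E|auto].
  - rewrite (sum_single _ N K).
    2:{ intros k Hne. unfold Cc. destruct (Rle_dec (2 ^ k) ((1 - a) * INR N)) as [|Hn]; auto.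
        destruct (Req_dec (cf k N) 0) as [E|E]; auto. exfalso.
        assert (k < K)%nat by (pose proof (Hk k E); lia).
        assert (2 ^ S k <= 2 ^ K) by (apply pow2_le_R; lia).
        simpl in H0. simpl in HK2r. nra. }
    2:{ pose proof (log2_le_self N). lia. }
    destruct K as [|K'] eqn:EK.
    + unfold Cc. destruct (Rle_dec _ _). pose proof (U_anti M N HMN). lra.
      destruct (cf_spec 0 N) as [[H _]|[_ ->]]. lia. pose proof (U_anti M N HMN). lra.
    + assert (HMK : (M < 2 ^ S K')%nat).
      { apply INR_lt. rewrite INR_pow2. lra. }
      assert (Hl : (Nat.log2 M <= K')%nat).
      { destruct (Nat.eq_dec M 0) as [->|HM0]. rewrite Nat.log2_nonpos; lia.
        assert (Nat.log2 M < S K')%nat by (apply Nat.log2_lt_pow2; lia). lia. }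
      assert (U M >= (/2) ^ K') by (apply Rle_ge, half_pow_anti; auto).
      assert (Cc a N (S K') <= (/2) ^ S K').
      { unfold Cc. destruct (Rle_dec _ _). apply Rlt_le, half_pow_pos. apply cf_le. }
      unfold U at 1. fold K. rewrite EK. simpl in *. lra.
Qed.

Definition fl (y : R) : nat := (Z.to_nat (up y) - 1)%nat.

Lemma fl_spec y : 0 <= y -> INR (fl y) <= y < INR (fl y) + 1.
Proof.
  intros Hy. destruct (archimed y) as [H1 H2].
  assert (Hu : (0 < up y)%Z) by (apply lt_0_IZR; lra).
  assert (E : INR (Z.to_nat (up y)) = IZR (up y)).
  { rewrite INR_IZR_INZ, Z2Nat.id; auto; lia. }
  assert (Hn : (1 <= Z.to_nat (up y))%nat) by lia.
  unfold fl. rewrite minus_INR by auto. rewrite E. simpl. lra.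
Qed.

Definition UBn (n : nat) := forall eta, 0 < eta -> eta <= /2 ->
  exists C, 0 <= C /\ forall N M, (1 <= N)%nat -> INR M <= (1 - eta) * INR N ->
    tl n N <= INR n * U M + C / (INR N) ^ 2.

Lemma crude n : UBn n -> exists D, 0 <= D /\ forall L, (1 <= L)%nat -> tl n L <= D / INR L.
Proof.
  intros H. destruct (H (/2)) as [C [HC HB]]; [lra|lra|].
  exists (4 * INR n + C). split. pose proof (pos_INR n); lra.
  intros L HL. assert (HLr : 1 <= INR L) by (apply (le_INR 1); auto).
  destruct (fl_spec (INR L / 2)) as [F1 F2]; [lra|].
  specialize (HB L (fl (INR L / 2)) HL ltac:(lra)).
  pose proof (U_small (fl (INR L / 2))) as HU.
  pose proof (pos_INR n). pose proof (pos_INR (fl (INR L / 2))).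
  assert (HU2 : U (fl (INR L / 2)) <= 4 / INR L).
  { eapply Rle_trans; [apply HU|]. apply Rmult_le_reg_l with (INR L * (INR (fl (INR L / 2)) + 1)). nra.
    field_simplify; nra. }
  assert (HC2 : C / INR L ^ 2 <= C / INR L).
  { unfold Rdiv. apply Rmult_le_compat_l; auto. apply Rinv_le_contravar. lra. nra. }
  assert (INR n * U (fl (INR L / 2)) <= INR n * (4 / INR L)) by (apply Rmult_le_compat_l; auto).
  eapply Rle_trans; [apply HB|]. unfold Rdiv in *. nra.
Qed.

Lemma UB_all n : UBn n.
Proof.
  induction n.
  - intros eta _ _. exists 0. split. lra. intros N M _ _. rewrite tl0. simpl.
    unfold Rdiv. rewrite Rmult_0_l. lra.
  - intros eta He He2. set (a := eta / 2).
    assert (Ha : 0 < a) by (unfold a; lra). assert (Ha2 : a <= /2) by (unfold a; lra).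
    assert (Ha4 : a <= /4) by (unfold a; lra).
    destruct (IHn a Ha Ha2) as [C [HC IHC]].
    destruct (crude n IHn) as [D [HD HDb]].
    exists (2 * C + 2 * D / (a * a)). split.
    { assert (0 <= D / (a * a)) by (apply Rmult_le_pos; [auto|apply Rlt_le, Rinv_0_lt_compat; nra]). lra. }
    intros N M HN HM.
    assert (HNr : 1 <= INR N) by (apply (le_INR 1); auto).
    set (Nr := INR N) in *.
    set (alpha := INR n * U M + 2 * C / Nr ^ 2).
    set (beta := D / (a * Nr)).
    pose proof (pos_INR n) as Hn0. pose proof (U_pos M) as HUM.
    assert (Halpha : 0 <= alpha).
    { unfold alpha. assert (0 <= 2 * C / Nr ^ 2) by (apply Rmult_le_pos; [lra|apply Rlt_le, Rinv_0_lt_compat; nra]). nra. }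
    assert (Hbeta : 0 <= beta) by (apply Rmult_le_pos; [auto|apply Rlt_le, Rinv_0_lt_compat; nra]).
    set (A := fun k => if Rle_dec (2 ^ k) (a * Nr) then cf k N else 0).
    set (B := fun k => if Rle_dec (2 ^ k) (a * Nr) then 0 else
                       if Rle_dec (2 ^ k) ((1 - a) * Nr) then cf k N else 0).
    assert (Hpt : forall k, (k <= N)%nat -> cf k N * tl n (N - 2 ^ k) <= A k * alpha + B k * beta + Cc a N k).
    { intros k _. unfold A, B, Cc. fold Nr.
      destruct (cf_spec k N) as [[Hk1 [Hk2 Ec]]| [_ Ec]].
      2:{ rewrite Ec. destruct (Rle_dec (2 ^ k) (a * Nr)); destruct (Rle_dec (2 ^ k) ((1 - a) * Nr)); lra. }
      set (L := (N - 2 ^ k)%nat).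
      assert (HL : INR L = Nr - 2 ^ k) by (unfold L; rewrite minus_INR, INR_pow2; auto).
      assert (Hk2r : 2 ^ k <= Nr) by (unfold Nr; rewrite <- INR_pow2; apply le_INR; auto).
      pose proof (tl_le1 n L) as T3.
      assert (T1 : 2 ^ k <= a * Nr -> tl n L <= alpha).
      { intros h. assert (HL1 : (1 <= L)%nat).
        { assert (INR 0 < INR L) by (simpl; nra). apply INR_lt in H. lia. }
        assert (HML : INR M <= (1 - a) * INR L).
        { rewrite HL. assert ((1 - a) * (1 - a) >= 1 - eta) by (unfold a; nra). nra. }
        specialize (IHC L M HL1 HML).
        assert (C / INR L ^ 2 <= 2 * C / Nr ^ 2).
        { rewrite HL. assert (Hq : Nr ^ 2 / 2 <= (Nr - 2 ^ k) ^ 2) by nra.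
          assert (Hi : / (Nr - 2 ^ k) ^ 2 <= / (Nr ^ 2 / 2)) by (apply Rinv_le_contravar; nra).
          assert (Ei : / (Nr ^ 2 / 2) = 2 / Nr ^ 2) by (field; nra).
          unfold Rdiv. rewrite Ei in Hi. unfold Rdiv in Hi. nra. }
        unfold alpha. lra. }
      assert (T2 : a * Nr < 2 ^ k -> 2 ^ k <= (1 - a) * Nr -> tl n L <= beta).
      { intros h h'. assert (HL1 : (1 <= L)%nat).
        { assert (INR 0 < INR L) by (simpl; nra). apply INR_lt in H. lia. }
        specialize (HDb L HL1). unfold beta. eapply Rle_trans; [apply HDb|].
        unfold Rdiv. apply Rmult_le_compat_l; auto. apply Rinv_le_contravar. nra. nra. }
      pose proof (half_pow_pos k) as Hc. rewrite Ec.
      destruct (Rle_dec (2 ^ k) (a * Nr)); destruct (Rle_dec (2 ^ k) ((1 - a) * Nr)).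
      + specialize (T1 r). nra.
      + exfalso. apply n0. nra.
      + assert (a * Nr < 2 ^ k) by lra. specialize (T2 H r). nra.
      + nra. }
    rewrite tl_rec. fold Nr.
    pose proof (sum_le _ _ _ Hpt) as Hs.
    rewrite !sum_add in Hs.
    rewrite (sum_ext (fun k => A k * alpha) (fun k => alpha * A k)) in Hs by (intros; ring).
    rewrite (sum_ext (fun k => B k * beta) (fun k => beta * B k)) in Hs by (intros; ring).
    rewrite !sum_scal in Hs.
    assert (SA1 : sum_f_R0 A N <= 1).
    { pose proof (sumcf N). pose proof (U_pos N).
      assert (sum_f_R0 A N <= sum_f_R0 (fun k => cf k N) N).
      { apply sum_le. intros k _. unfold A. pose proof (cf_nonneg k N). destruct (Rle_dec _ _); lra. }
      lra. }
    assert (SB : sum_f_R0 B N <= 2 / (a * Nr)).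
    { eapply Rle_trans; [|apply (geom_tail (a * Nr) N); nra].
      apply sum_le. intros k _. unfold B. pose proof (cf_le k N). pose proof (cf_nonneg k N).
      destruct (Rle_dec (2 ^ k) (a * Nr)). destruct (Rlt_dec _ _); lra.
      destruct (Rle_dec _ _); destruct (Rlt_dec _ _); lra. }
    assert (HM2 : INR M <= (1 - a) * Nr) by (unfold a in *; nra).
    pose proof (Cc_part a N M Ha Ha4 HN HM2) as HCc.
    assert (Hb2 : beta * sum_f_R0 B N <= beta * (2 / (a * Nr))) by (apply Rmult_le_compat_l; auto).
    assert (Ha2' : alpha * sum_f_R0 A N <= alpha).
    { assert (0 <= sum_f_R0 A N). { apply sum_nonneg. intros k _. unfold A. pose proof (cf_nonneg k N). destruct (Rle_dec _ _); lra. }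
      nra. }
    assert (Eb : beta * (2 / (a * Nr)) = 2 * D / (a * a) / Nr ^ 2) by (unfold beta; field; nra).
    assert (Ef : INR (S n) * U M + (2 * C + 2 * D / (a * a)) / Nr ^ 2 =
                 U M + alpha + 2 * D / (a * a) / Nr ^ 2) by (rewrite S_INR; unfold alpha; field; nra).
    rewrite Ef. lra.
Qed.

Lemma tail_eq n x : 0 <= x -> stp_tail n x = tl n (fl x).
Proof.
  intros Hx. destruct (fl_spec x Hx) as [H1 H2].
  unfold stp_tail, tl, stp_cdf. f_equal.
  assert (E : Z.to_nat (up x) = S (fl x)).
  { unfold fl. destruct (archimed x) as [A1 A2].
    assert (Hu : (0 < up x)%Z) by (apply lt_0_IZR; lra). lia. }
  rewrite E, tech5.
  destruct (Rle_dec (INR (S (fl x))) x) as [h|h].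
  { rewrite S_INR in h. lra. }
  unfold F. rewrite Rplus_0_r. apply sum_ext. intros k Hk.
  destruct (Rle_dec (INR k) x) as [h'|h']; auto. exfalso. apply h'.
  apply le_INR in Hk. lra.
Qed.

Lemma fl_INR N : fl (INR N) = N.
Proof.
  destruct (fl_spec (INR N) (pos_INR N)) as [H1 H2].
  apply INR_le in H1. assert (N < S (fl (INR N)))%nat by (apply INR_lt; rewrite S_INR; lra). lia.
Qed.

Lemma INR_lt_pow j : INR j < 2 ^ j.
Proof.
  induction j. simpl; lra. rewrite S_INR. simpl.
  assert (1 <= 2 ^ j) by (apply pow_R1_Rle; lra). lra.
Qed.

Lemma exists_pow y : exists j, (1 <= j)%nat /\ y < 2 ^ j.
Proof.
  destruct (fl_spec (Rabs y) (Rabs_pos y)) as [_ H].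
  exists (S (fl (Rabs y))). split. lia.
  pose proof (INR_lt_pow (S (fl (Rabs y)))). rewrite S_INR in H0.
  pose proof (Rle_abs y). lra.
Qed.

Lemma U_pow k : U (2 ^ k) = (/2) ^ k.
Proof. unfold U. rewrite Nat.log2_pow2 by lia. reflexivity. Qed.

Lemma ln2_pos : 0 < ln 2.
Proof. rewrite <- ln_1. apply ln_increasing; lra. Qed.

Lemma exp_le a b : a <= b -> exp a <= exp b.
Proof. intros [H|H]. apply Rlt_le, exp_increasing; auto. subst; lra. Qed.

Lemma exp_pow K : exp (INR K * ln 2) = 2 ^ K.
Proof. rewrite <- (Rpower_pow K 2) by lra. reflexivity. Qed.

Lemma part1 n : forall delta : R, 0 < delta ->
     forall eps : R, 0 < eps ->
     exists M : R, forall x : R, M < x -> delta <= frac_part (log2 x) ->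
       Rabs (stp_tail n x / stp_tail 1 x - INR n) < eps.
Proof.
  intros delta Hd eps He.
  pose proof ln2_pos as Hl2.
  set (th := exp (- (delta * ln 2))).
  assert (Hth0 : 0 < th) by apply exp_pos.
  assert (Hth1 : th < 1) by (rewrite <- exp_0; apply exp_increasing; nra).
  set (eta := Rmin (/2) ((1 - th) / 2)).
  assert (He1 : 0 < eta) by (apply Rmin_pos; lra).
  assert (He2 : eta <= /2) by apply Rmin_l.
  assert (He3 : eta <= (1 - th) / 2) by apply Rmin_r.
  destruct (UB_all n eta He1 He2) as [C [HC HUB]].
  pose proof (pos_INR n) as Hn.
  exists (2 + 2 / (1 - th) + (C + 2 * INR n ^ 2 + 1) / eps).
  intros x Hx Hfr.
  assert (Hq1 : 0 <= 2 / (1 - th)) by (apply Rlt_le, Rdiv_lt_0_compat; lra).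
  assert (Hq2 : 0 <= (C + 2 * INR n ^ 2 + 1) / eps) by (apply Rlt_le, Rdiv_lt_0_compat; nra).
  assert (Hx0 : 0 <= x) by lra.
  rewrite !tail_eq by auto. rewrite tl1.
  set (N := fl x). destruct (fl_spec x Hx0) as [HN1 HN2]. fold N in HN1, HN2.
  set (Nr := INR N) in *.
  unfold frac_part in Hfr. set (j := Int_part (log2 x)) in Hfr.
  destruct (base_Int_part (log2 x)) as [Hj1 Hj2]. fold j in Hj1, Hj2.
  assert (Hlnx : 0 <= ln x).
  { destruct (Rle_lt_dec 0 (ln x)); auto. exfalso.
    assert (exp (ln x) < exp 0) by (apply exp_increasing; auto).
    rewrite exp_ln, exp_0 in H by lra. lra. }
  assert (Hlog : 0 <= log2 x) by (unfold log2; apply Rmult_le_pos; [auto|apply Rlt_le, Rinv_0_lt_compat; auto]).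
  assert (Hj0 : (0 <= j)%Z) by (assert (IZR (-1) < IZR j) by lra; apply lt_IZR in H; lia).
  set (K := Z.to_nat j).
  assert (HjK : IZR j = INR K) by (unfold K; rewrite INR_IZR_INZ, Z2Nat.id; auto).
  rewrite HjK in Hfr, Hj1, Hj2.
  assert (HlK1 : (INR K + delta) * ln 2 <= ln x).
  { unfold log2 in Hfr. assert (ln x / ln 2 * ln 2 = ln x) by (field; lra). nra. }
  assert (HlK2 : ln x < (INR (S K)) * ln 2).
  { rewrite S_INR. unfold log2 in Hj2. assert (ln x / ln 2 * ln 2 = ln x) by (field; lra). nra. }
  assert (HK1 : 2 ^ K <= th * x).
  { apply exp_le in HlK1. rewrite exp_ln in HlK1 by lra.
    rewrite Rmult_plus_distr_r, exp_plus, exp_pow in HlK1.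
    unfold th. rewrite exp_Ropp.
    pose proof (exp_pos (delta * ln 2)).
    apply Rmult_le_reg_l with (exp (delta * ln 2)); auto. field_simplify; [|lra]. lra. }
  assert (HK2 : x < 2 ^ S K).
  { apply exp_increasing in HlK2. rewrite exp_ln in HlK2 by lra. rewrite exp_pow in HlK2. auto. }
  assert (HNK1 : (2 ^ K <= N)%nat).
  { assert (INR (2 ^ K) < INR N + 1) by (rewrite INR_pow2; fold Nr; nra).
    rewrite <- S_INR in H. apply INR_lt in H. lia. }
  assert (HNK2 : (N < 2 ^ S K)%nat) by (apply INR_lt; rewrite INR_pow2; fold Nr; lra).
  assert (HlogN : Nat.log2 N = K) by (apply Nat.log2_unique; lia).
  assert (HN1' : (1 <= N)%nat) by (pose proof (Nat.pow_nonzero 2 K); lia).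
  assert (HNbig : Nr > 1 + 2 / (1 - th) + (C + 2 * INR n ^ 2 + 1) / eps) by lra.
  assert (HMp : INR (2 ^ K) <= (1 - eta) * Nr).
  { rewrite INR_pow2.
    assert (Nr * (1 - th) >= 2) .
    { assert (2 / (1 - th) * (1 - th) = 2) by (field; lra). nra. }
    nra. }
  specialize (HUB N (2 ^ K)%nat HN1' HMp).
  rewrite U_pow in HUB.
  assert (HUN : U N = (/2) ^ K) by (unfold U; rewrite HlogN; auto).
  rewrite <- HUN in HUB.
  pose proof (tl_lower n N) as HLB.
  pose proof (U_pos N) as HU0. pose proof (U_low N HN1') as HU1. pose proof (U_up N) as HU2.
  fold Nr in HU1, HU2.
  set (t := U N) in *. set (T := tl n N) in *.
  assert (HCe : C < eps * Nr).
  { assert ((C + 2 * INR n ^ 2 + 1) / eps * eps = C + 2 * INR n ^ 2 + 1) by (field; lra). nra. }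
  assert (Hne : 2 * INR n ^ 2 < eps * (Nr + 1)).
  { assert ((C + 2 * INR n ^ 2 + 1) / eps * eps = C + 2 * INR n ^ 2 + 1) by (field; lra). nra. }
  assert (Hup : T < (INR n + eps) * t).
  { assert (C / Nr ^ 2 < eps * t).
    { apply Rmult_lt_reg_r with (Nr ^ 2). nra. field_simplify; [|lra]. nra. }
    fold Nr in HUB. nra. }
  assert (Hlo : (INR n - eps) * t < T).
  { assert (INR n ^ 2 * t < eps). { nra. }
    nra. }
  apply Rabs_def1.
  - apply Rmult_lt_reg_r with t; auto. replace ((T / t - INR n) * t) with (T - INR n * t) by (field; lra). nra.
  - apply Rmult_lt_reg_r with t; auto. replace ((T / t - INR n) * t) with (T - INR n * t) by (field; lra). nra.
Qed.

Lemma part2a n : forall eps : R, 0 < eps ->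
      exists M : R, forall x : R, M < x -> INR n - eps < x * stp_tail n x.
Proof.
  intros eps He. pose proof (pos_INR n) as Hn.
  assert (Hq : 0 <= 2 * INR n ^ 2 / eps) by (apply Rmult_le_pos; [nra|apply Rlt_le, Rinv_0_lt_compat; lra]).
  exists (2 * INR n ^ 2 / eps + 2 * INR n + 2). intros x Hx.
  rewrite tail_eq by lra.
  set (N := fl x). destruct (fl_spec x ltac:(lra)) as [HN1 HN2]. fold N in HN1, HN2.
  set (Nr := INR N) in *.
  assert (HN1' : (1 <= N)%nat).
  { assert (INR 0 < INR N) by (simpl; fold Nr; lra). apply INR_lt in H. lia. }
  pose proof (tl_lower n N) as HLB.
  pose proof (U_pos N) as HU0. pose proof (U_low N HN1') as HU1. pose proof (U_up N) as HU2.
  fold Nr in HU1, HU2.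
  set (t := U N) in *. set (T := tl n N) in *.
  assert (Hne : 2 * INR n ^ 2 < eps * (Nr + 1)).
  { assert (2 * INR n ^ 2 / eps * eps = 2 * INR n ^ 2) by (field; lra). nra. }
  assert (H1 : INR n ^ 2 * t < eps) by nra.
  assert (H2 : INR n * t <= 1) by nra.
  assert (H3 : 0 <= INR n - INR n ^ 2 * t) by nra.
  assert (H4 : 1 <= x * t) by nra.
  assert (H5 : x * (INR n * t - INR n ^ 2 * t ^ 2) <= x * T) by (apply Rmult_le_compat_l; lra).
  assert (H6 : x * (INR n * t - INR n ^ 2 * t ^ 2) = (x * t) * (INR n - INR n ^ 2 * t)) by ring.
  nra.
Qed.

Lemma part2b n : forall eps M : R, 0 < eps ->
      exists x : R, M < x /\ x * stp_tail n x < INR n + eps.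
Proof.
  intros eps M He. pose proof (pos_INR n) as Hn.
  destruct (exists_pow (2 * INR n / eps)) as [j [Hj1 Hj2]].
  pose proof (two_pow_pos j) as Hj0.
  assert (Hj3 : 2 <= 2 ^ j) by (pose proof (pow2_le_R 1 j Hj1); simpl in H; lra).
  set (eta := / (2 ^ j + 1)).
  assert (He1 : 0 < eta) by (apply Rinv_0_lt_compat; lra).
  assert (He2 : eta <= /2) by (apply Rinv_le_contravar; lra).
  destruct (UB_all n eta He1 He2) as [C [HC HUB]].
  assert (Hq : 0 <= 2 * C / eps) by (apply Rmult_le_pos; [nra|apply Rlt_le, Rinv_0_lt_compat; lra]).
  destruct (exists_pow (Rabs M + 2 * C / eps + 1)) as [K [HK1 HK2]].
  pose proof (two_pow_pos K) as HK0. pose proof (Rle_abs M).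
  set (N := (2 ^ (j + K) + 2 ^ K)%nat).
  assert (HNr : INR N = 2 ^ j * 2 ^ K + 2 ^ K) by (unfold N; rewrite plus_INR, !INR_pow2, pow_add; ring).
  exists (INR N). split. nra.
  rewrite tail_eq by apply pos_INR. rewrite fl_INR.
  assert (HN1 : (1 <= N)%nat) by (unfold N; pose proof (Nat.pow_nonzero 2 K); lia).
  assert (HM : INR (2 ^ (j + K)) <= (1 - eta) * INR N).
  { rewrite HNr, INR_pow2, pow_add. unfold eta. right. field. lra. }
  specialize (HUB N _ HN1 HM). rewrite U_pow in HUB.
  rewrite HNr in HUB |- *.
  set (a := 2 ^ j) in *. set (b := 2 ^ K) in *.
  assert (Ea : (/2)^j * a = 1) by apply half_pow_mul.
  assert (Eb : (/2)^K * b = 1) by apply half_pow_mul.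
  rewrite pow_add in HUB.
  set (ha := (/2)^j) in *. set (hb := (/2)^K) in *.
  pose proof (half_pow_pos j). pose proof (half_pow_pos K).
  set (T := tl n N) in *.
  assert (Hx0 : 0 < a * b + b) by nra.
  assert (B1 : (a * b + b) * T <= (a * b + b) * (INR n * (ha * hb) + C / (a * b + b) ^ 2))
    by (apply Rmult_le_compat_l; lra).
  assert (E1 : (a * b + b) * (INR n * (ha * hb) + C / (a * b + b) ^ 2) = INR n + INR n * ha + C / (a * b + b)).
  { assert (Q : (a * b + b) * (ha * hb) = (ha * a) * (hb * b) + ha * (hb * b)) by ring.
    rewrite Ea, Eb in Q.
    assert (Q2 : (a * b + b) * (C / (a * b + b) ^ 2) = C / (a * b + b)) by (field; lra).
    rewrite Rmult_plus_distr_l, Q2. replace ((a * b + b) * (INR n * (ha * hb))) with (INR n * ((a * b + b) * (ha * hb))) by ring.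
    rewrite Q. ring. }
  assert (E2 : INR n * ha < eps / 2).
  { assert (2 * INR n / eps * eps = 2 * INR n) by (field; lra). 
    apply Rmult_lt_reg_r with a. lra. replace (INR n * ha * a) with (INR n) by (rewrite Rmult_assoc, Ea; ring).
    nra. }
  assert (E3 : C / (a * b + b) < eps / 2).
  { assert (2 * C / eps * eps = 2 * C) by (field; lra).
    assert (eps * (2 * C / eps) < eps * b) by (apply Rmult_lt_compat_l; [lra|pose proof (Rabs_pos M); lra]).
    assert (HC2 : 2 * C < eps * b) by lra.
    apply Rmult_lt_reg_r with (a * b + b). lra.
    replace (C / (a * b + b) * (a * b + b)) with C by (field; lra). nra. }
  lra.
Qed.

Lemma part4a n : forall eps : R, 0 < eps ->
      exists M : R, forall x : R, M < x -> x * stp_tail n x < 2 * INR n + eps.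
Proof.
  intros eps He. pose proof (pos_INR n) as Hn.
  set (eta := Rmin (/2) (eps / (8 * INR n + eps))).
  assert (Hq0 : 0 < eps / (8 * INR n + eps)) by (apply Rdiv_lt_0_compat; lra).
  assert (He1 : 0 < eta) by (apply Rmin_pos; lra).
  assert (He2 : eta <= /2) by apply Rmin_l.
  assert (He3 : eta <= eps / (8 * INR n + eps)) by apply Rmin_r.
  destruct (UB_all n eta He1 He2) as [C [HC HUB]].
  set (G := 2 * INR n + eps + 2 * C).
  assert (HG : 0 < G) by (unfold G; lra).
  exists (4 * G / eps + 2). intros x Hx.
  assert (Hq : 0 <= 4 * G / eps) by (apply Rlt_le, Rdiv_lt_0_compat; lra).
  rewrite tail_eq by lra.
  set (N := fl x). destruct (fl_spec x ltac:(lra)) as [HN1 HN2]. fold N in HN1, HN2.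
  set (Nr := INR N) in *.
  assert (HN1' : (1 <= N)%nat).
  { assert (INR 0 < INR N) by (simpl; fold Nr; lra). apply INR_lt in H. lia. }
  assert (HNG : 4 * G < eps * Nr).
  { assert (4 * G / eps * eps = 4 * G) by (field; lra). nra. }
  set (M' := fl ((1 - eta) * Nr)).
  destruct (fl_spec ((1 - eta) * Nr) ltac:(nra)) as [HM1 HM2]. fold M' in HM1, HM2.
  specialize (HUB N M' HN1' HM1). fold Nr in HUB.
  pose proof (U_small M') as HUs.
  pose proof (pos_INR M').
  assert (HU2 : U M' <= 2 / ((1 - eta) * Nr)).
  { eapply Rle_trans; [apply HUs|]. unfold Rdiv. apply Rmult_le_compat_l. lra.
    apply Rinv_le_contravar; nra. }
  assert (Heta : 2 * INR n / (1 - eta) <= 2 * INR n + eps / 4).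
  { apply Rmult_le_reg_r with (1 - eta). lra.
    replace (2 * INR n / (1 - eta) * (1 - eta)) with (2 * INR n) by (field; lra).
    assert (eta * (8 * INR n + eps) <= eps).
    { replace eps with (eps / (8 * INR n + eps) * (8 * INR n + eps)) at 2 by (field; lra).
      apply Rmult_le_compat_r; lra. }
    nra. }
  set (T := tl n N) in *.
  set (bnd := INR n * U M' + C / Nr ^ 2) in *.
  assert (Hbnd : bnd <= (2 * INR n + eps / 4) / Nr + C / Nr ^ 2).
  { unfold bnd. apply Rplus_le_compat_r.
    eapply Rle_trans. apply Rmult_le_compat_l. lra. apply HU2.
    replace (INR n * (2 / ((1 - eta) * Nr))) with ((2 * INR n / (1 - eta)) / Nr) by (field; nra).
    unfold Rdiv. apply Rmult_le_compat_r. apply Rlt_le, Rinv_0_lt_compat; lra. apply Heta. }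
  assert (Hb0 : 0 <= bnd).
  { unfold bnd. pose proof (U_pos M'). assert (0 <= C / Nr ^ 2) by (apply Rmult_le_pos; [lra|apply Rlt_le, Rinv_0_lt_compat; nra]). nra. }
  assert (S1 : x * T <= x * bnd) by (apply Rmult_le_compat_l; lra).
  assert (S2 : x * bnd <= (Nr + 1) * bnd) by (apply Rmult_le_compat_r; lra).
  assert (S3 : (Nr + 1) * ((2 * INR n + eps / 4) / Nr + C / Nr ^ 2) =
     (2 * INR n + eps / 4) + ((2 * INR n + eps / 4) + C) / Nr + C / Nr ^ 2) by (field; lra).
  assert (S4 : (Nr + 1) * bnd <= (Nr + 1) * ((2 * INR n + eps / 4) / Nr + C / Nr ^ 2))
    by (apply Rmult_le_compat_l; lra).
  assert (S5 : ((2 * INR n + eps / 4) + C) / Nr + C / Nr ^ 2 < eps / 2).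
  { assert (C / Nr ^ 2 <= C / Nr).
    { unfold Rdiv. apply Rmult_le_compat_l; auto. apply Rinv_le_contravar; nra. }
    assert (((2 * INR n + eps / 4) + C) / Nr + C / Nr = ((2 * INR n + eps / 4) + 2 * C) / Nr) by (field; lra).
    assert (((2 * INR n + eps / 4) + 2 * C) / Nr < eps / 2).
    { apply Rmult_lt_reg_r with Nr. lra.
      replace (((2 * INR n + eps / 4) + 2 * C) / Nr * Nr) with ((2 * INR n + eps / 4) + 2 * C) by (field; lra).
      unfold G in HNG. nra. }
    lra. }
  lra.
Qed.

Lemma part4b n : forall eps M : R, 0 < eps ->
      exists x : R, M < x /\ 2 * INR n - eps < x * stp_tail n x.
Proof.
  intros eps M He. pose proof (pos_INR n) as Hn.
  set (G := INR n + 2 * INR n ^ 2).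
  assert (HG : 0 <= G) by (unfold G; nra).
  assert (Hq : 0 <= G / eps) by (apply Rmult_le_pos; [auto|apply Rlt_le, Rinv_0_lt_compat; lra]).
  destruct (exists_pow (Rabs M + G / eps + 2)) as [K [HK1 HK2]].
  pose proof (Rle_abs M).
  set (N := (2 ^ S K - 1)%nat).
  pose proof (Nat.pow_nonzero 2 K ltac:(lia)) as Hp0.
  assert (HpS : (2 ^ S K = 2 * 2 ^ K)%nat) by reflexivity.
  assert (HNr : INR N = 2 * 2 ^ K - 1).
  { unfold N. rewrite minus_INR by lia. rewrite INR_pow2. simpl. lra. }
  assert (HlogN : Nat.log2 N = K) by (apply Nat.log2_unique; lia).
  assert (HN1 : (1 <= N)%nat) by lia.
  exists (INR N). split. { pose proof (Rabs_pos M). rewrite HNr. lra. }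
  rewrite tail_eq by apply pos_INR. rewrite fl_INR.
  pose proof (tl_lower n N) as HLB.
  assert (HUN : U N = (/2) ^ K) by (unfold U; rewrite HlogN; auto).
  rewrite HUN in HLB. rewrite HNr.
  pose proof (half_pow_mul K) as E. pose proof (half_pow_pos K).
  set (t := (/2) ^ K) in *. set (b := 2 ^ K) in *. set (T := tl n N) in *.
  assert (Hx0 : 0 <= 2 * b - 1) by (pose proof (Rabs_pos M); lra).
  assert (S1 : (2 * b - 1) * (INR n * t - INR n ^ 2 * t ^ 2) <= (2 * b - 1) * T)
    by (apply Rmult_le_compat_l; auto).
  assert (S2 : (2 * b - 1) * (INR n * t - INR n ^ 2 * t ^ 2) = 2 * INR n - t * G + INR n ^ 2 * t ^ 2).
  { unfold G. replace (2 * b - 1) with (2 * b * 1 - 1) by ring.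
    assert (Eb : b = b * (t * b)) by (rewrite E; ring). 
    replace ((2 * b * 1 - 1) * (INR n * t - INR n ^ 2 * t ^ 2)) with
      (2 * INR n * (t * b) - 2 * INR n ^ 2 * t * (t * b) - INR n * t + INR n ^ 2 * t ^ 2) by ring.
    rewrite E. ring. }
  assert (S3 : t * G < eps).
  { assert (G / eps * eps = G) by (field; lra).
    assert (G < eps * b) by (pose proof (Rabs_pos M); nra).
    nra. }
  nra.
Qed.

Theorem mainTheorem11 :
  forall n : nat, (1 <= n)%nat ->
  (forall delta : R, 0 < delta ->
     forall eps : R, 0 < eps ->
     exists M : R, forall x : R, M < x -> delta <= frac_part (log2 x) ->
       Rabs (stp_tail n x / stp_tail 1 x - INR n) < eps)
  /\
  (* liminf_{x->oo} x P{S_n > x} = n *)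
  ((forall eps : R, 0 < eps ->
      exists M : R, forall x : R, M < x -> INR n - eps < x * stp_tail n x)
   /\ (forall eps M : R, 0 < eps ->
      exists x : R, M < x /\ x * stp_tail n x < INR n + eps))
  /\
  INR n < 2 * INR n
  /\
  (* limsup_{x->oo} x P{S_n > x} = 2n *)
  ((forall eps : R, 0 < eps ->
      exists M : R, forall x : R, M < x -> x * stp_tail n x < 2 * INR n + eps)
   /\ (forall eps M : R, 0 < eps ->
      exists x : R, M < x /\ 2 * INR n - eps < x * stp_tail n x)).
Proof.
  intros n Hn.
  split; [apply part1|].
  split; [split; [apply part2a|apply part2b]|].
  split; [assert (1 <= INR n) by (apply (le_INR 1); auto); lra|].
  split; [apply part4a|apply part4b].
Qed.
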